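(* Fix an active search instance $(h^\star,\mathcal D)$ with $\Pr(V=1)>0$ and costs $c_{\mathrm{rew}},c_{\mathrm{ver}}>0$. Among all distribution-aware pool-based active search policies, there exists an optimal policy (minimizing expected cost) that never stores candidates for later use. In particular, the streaming threshold policy—generate one candidate at a time, verify it immediately if its score $r$ satisfies $h^\star(r)\ge\tau^\star$ and discard it otherwise—is optimal within the class of all distribution-aware pool-based policies, where $\tau^\star\in(0,1)$ is the unique solution of $c_{\mathrm{ver}}\mathbb E_{R\sim\mathcal D}[(h^\star(R)-\tau^\star)_+]=\tau^\star c_{\mathrm{rew}}$.
   Context: An active search instance $(h^\star,\mathcal D)$: $\mathcal D$ a distribution on $\mathbb R$, $h^\star:\mathbb R\to[0,1]$ measurable; each generated candidate has score $R\sim\mathcal D$ and hidden label $V$ with $\Pr(V=1\mid R=r)=h^\star(r)$, candidates i.i.d. A pool-based policy maintains a pool of generated but unverified candidates; at each step, as a (possibly randomized) function of the history (scores, previous verification choices, labels), it either generates a fresh candidate (cost $c_{\mathrm{rew}}$, score observed, added to the pool) or verifies a pool candidate (cost $c_{\mathrm{ver}}$, label observed, candidate removed; it stops and outputs the candidate if the label is $1$); it stops only on a positive label. Cost $c_{\mathrm{rew}}N_{\mathrm{rew}}+c_{\mathrm{ver}}N_{\mathrm{ver}}$, $+\infty$ if no positive is found. Distribution-aware: the policy knows $(\mathcal D,h^\star)$. $(u)_+=\max\{u,0\}$. *)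

(* Defs.v *)
From HB Require Import structures.
From mathcomp Require Import all_boot all_order all_algebra.
From mathcomp Require Import all_classical all_reals all_analysis.
Set Implicit Arguments. Unset Strict Implicit. Unset Printing Implicit Defensive.
Import Order.TTheory GRing.Theory Num.Theory.
Local Open Scope classical_set_scope.
Local Open Scope ring_scope.

(* An action is [None] = "generate a fresh candidate" or
   [Some i] = "verify the i-th generated candidate" (candidates are indexed
   0,1,2,... in order of generation).  A (running) history is the
   chronological list [a] of actions taken so far together with the
   chronological list [rs] of the scores of the generated candidates
   (all labels observed so far are 0, since the search stops at the first
   positive label). *)
Definition action := option nat.

Definition ngen (a : seq action) : nat := count (pred1 None) a.


Section Policies.
Variable R : realType.

Definition valid (a : seq action) (rs : seq R) : seq action :=
  None :: [seq Some i | i <- iota 0 (size rs) & Some i \notin a].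

Definition policy := seq action -> seq R -> action -> R.

Definition is_policy (pi : policy) : Prop :=
  [/\ (forall a rs b, 0 <= pi a rs b),
      (forall a rs b, b \notin valid a rs -> pi a rs b = 0),
      (forall a rs, \sum_(b <- valid a rs) pi a rs b = 1) &
      (forall a b, measurable_fun setT
          (fun t : (ngen a).-tuple R => pi a (tval t) b))].

(* The policy never stores candidates: it only ever verifies the candidate
   generated at the immediately preceding step. *)
Definition never_stores (pi : policy) : Prop :=
  forall a rs i, 0 < pi a rs (Some i) ->
    last (Some 0%N) a = None /\ i = (size rs).-1.

Variables (D : probability R R) (h : R -> R) (c_rew c_ver : R).

(* Generating costs c_rew and draws a fresh score from D; verifying
   candidate i costs c_ver and, given the history, its label is 1 with
   probability h (score of i), in which case the search stops. *)
Fixpoint cost_T (pi : policy) (T : nat) (a : seq action) (rs : seq R)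
  : \bar R :=
  match T with
  | 0 => 0%E
  | T'.+1 =>
    (\sum_(b <- valid a rs)
       (pi a rs b)%:E *
       match b with
       | None => c_rew%:E +
                 \int[D]_r cost_T pi T' (rcons a None) (rcons rs r)
       | Some i => c_ver%:E +
                 (1 - h (nth 0 rs i))%:E * cost_T pi T' (rcons a (Some i)) rs
       end)%E
  end.

(* Expected total cost (in [0, +oo]); the partial costs are nondecreasing
   in T, so this is their limit.  It is +oo when no positive is found with
   positive probability, since every step costs at least min(c_rew,c_ver). *)
Definition exp_cost (pi : policy) : \bar R :=
  ereal_sup (range (fun T => cost_T pi T [::] [::])).

(* The two
   side conditions (0 < size rs, newest candidate not yet verified) always
   hold on reachable histories; they only make the policy well defined on
   every (possibly unreachable) history. *)
Definition thr_action (tau : R) (a : seq action) (rs : seq R) : action :=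
  if [&& last (Some 0%N) a == None, (0 < size rs)%N,
         Some (size rs).-1 \notin a & tau <= h (last 0 rs)]
  then Some (size rs).-1 else None.

Definition threshold_policy (tau : R) : policy :=
  fun a rs b => if b == thr_action tau a rs then 1 else 0.

End Policies.

(* Main.v *)
Require Import Defs.
From HB Require Import structures.
From mathcomp Require Import all_boot all_order all_algebra.
From mathcomp Require Import all_classical all_reals all_analysis.
From mathcomp Require Import measurable_realfun.
From mathcomp Require Import ring lra.
Set Implicit Arguments. Unset Strict Implicit.
Import Order.TTheory GRing.Theory Num.Theory.
Local Open Scope classical_set_scope.
Local Open Scope ring_scope.

Lemma ngen_rcons a b : ngen (rcons a b) = (ngen a + (b == None))%N.
Proof. by rewrite /ngen -cats1 count_cat /= addn0; case: b. Qed.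

Section Meas.
Variables (R : realType) (D : probability R R) (h : R -> R) (cr cv : R).
Hypothesis mh : measurable_fun setT h.
Hypothesis h01 : forall r, 0 <= h r <= 1.
Hypothesis cr0 : 0 <= cr.
Hypothesis cv0 : 0 <= cv.
Variable pi : policy R.
Hypothesis pi0 : forall a rs b, 0 <= pi a rs b.
Hypothesis mpi : forall a b,
  measurable_fun setT (fun t : (ngen a).-tuple R => pi a (tval t) b).

Lemma cost_ge0 T a rs : (0 <= cost_T D h cr cv pi T a rs)%E.
Proof.
elim: T a rs => [|T IH] a rs //=.
apply: sume_ge0 => b _; apply: mule_ge0; first by rewrite lee_fin.
case: b => [i|].
  apply: adde_ge0; first by rewrite lee_fin.
  apply: mule_ge0 => //; rewrite lee_fin subr_ge0; by case/andP: (h01 (nth 0 rs i)).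
apply: adde_ge0; first by rewrite lee_fin.
by apply: integral_ge0 => r _.
Qed.

Lemma measurable_nth n i :
  measurable_fun setT (fun t : n.-tuple R => nth 0 (tval t) i).
Proof.
case: (ltnP i n) => Hi.
  rewrite (_ : (fun t : n.-tuple R => _) = (fun t => tnth t (Ordinal Hi))).
    exact: measurable_tnth.
  by apply: boolp.funext => t; rewrite (tnth_nth 0).
rewrite (_ : (fun t : n.-tuple R => _) = (fun _ => 0)).
  exact: measurable_cst.
by apply: boolp.funext => t; rewrite nth_default // size_tuple.
Qed.

Lemma measurable_rcons2 n :
  measurable_fun setT (fun p : n.-tuple R * R => rcons_tuple p.1 p.2).
Proof.
apply/measurable_fun_tnthP => j /=.
case: (ltnP j n) => Hj.
  rewrite (_ : _ \o _ = (fun p : n.-tuple R * R => tnth p.1 (Ordinal Hj))).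
    apply: (measurableT_comp (f := fun t : n.-tuple R => tnth t (Ordinal Hj))) => //.
    exact: measurable_tnth.
  apply: boolp.funext => p /=; rewrite (tnth_nth 0) /= nth_rcons size_tuple Hj.
  by rewrite (tnth_nth 0).
rewrite (_ : _ \o _ = (fun p : n.-tuple R * R => p.2)); first exact: measurable_snd.
apply: boolp.funext => p /=; rewrite (tnth_nth 0) /= nth_rcons size_tuple ltnNge Hj /=.
have -> : (j : nat) = n by apply/eqP; rewrite eqn_leq Hj -ltnS ltn_ord.
by rewrite eqxx.
Qed.

Lemma measurable_rcons1 n (t : n.-tuple R) :
  measurable_fun setT (fun r : R => rcons_tuple t r).
Proof.
apply: (measurableT_comp (@measurable_rcons2 n) (g := fun r => (t, r))).
exact: measurable_pair1.
Qed.

Lemma measurable_cost T : forall n a, ngen a = n ->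
  measurable_fun setT ((fun t : n.-tuple R => cost_T D h cr cv pi T a (tval t)) : n.-tuple R -> \bar R).
Proof.
elim: T => [|T IH] n a Hn /=.
  exact: measurable_cst.
rewrite (_ : (fun t : n.-tuple R => _) = (fun t : n.-tuple R =>
   \sum_(b <- None :: [seq Some i | i <- iota 0 n & Some i \notin a])
   ((pi a (tval t) b)%:E *
       match b with
       | None => cr%:E +
                 \int[D]_r cost_T D h cr cv pi T (rcons a None) (rcons (tval t) r)
       | Some i => cv%:E +
                 (1 - h (nth 0 (tval t) i))%:E * cost_T D h cr cv pi T (rcons a (Some i)) (tval t)
       end)%E)); last first.
  by apply: boolp.funext => t; rewrite /valid size_tuple.
apply: emeasurable_sum => b.
apply: emeasurable_funM.
  apply/measurable_EFinP; subst n; exact: mpi.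
case: b => [i|].
  apply: emeasurable_funD; first exact: measurable_cst.
  apply: emeasurable_funM.
    apply/measurable_EFinP.
    apply: measurable_funB; first exact: measurable_cst.
    apply: (measurableT_comp mh); exact: measurable_nth.
  by apply: IH; rewrite ngen_rcons addn0.
apply: emeasurable_funD; first exact: measurable_cst.
have mf : measurable_fun setT (fun p : n.-tuple R * R =>
    cost_T D h cr cv pi T (rcons a None) (tval (rcons_tuple p.1 p.2))).
  apply: (measurableT_comp (f := fun t : n.+1.-tuple R =>
      cost_T D h cr cv pi T (rcons a None) (tval t))).
    by apply: IH; rewrite ngen_rcons Hn addn1.
  exact: measurable_rcons2.
have := measurable_fun_fubini_tonelli_F (m2 := D) _ mf (fun p => cost_ge0 _ _ _).
by rewrite /fubini_F /=.
Qed.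


Lemma measurable_cost_rcons T a rs : size rs = ngen a ->
  measurable_fun setT (fun r => cost_T D h cr cv pi T (rcons a None) (rcons rs r)).
Proof.
move=> Hsz; have Ht : size rs == ngen a by apply/eqP.
pose t := Tuple Ht.
have := measurableT_comp (@measurable_cost T (ngen a).+1 (rcons a None) _)
  (@measurable_rcons1 _ t).
by apply; rewrite ngen_rcons addn1.
Qed.

End Meas.

Lemma aux1 (R : realType) (s : seq action) (w : action -> R) (F : action -> \bar R) c :
  (forall b, 0 <= w b) -> \sum_(b <- s) w b = 1 ->
  (forall b, b \in s -> (c%:E <= F b)%E) ->
  (c%:E <= \sum_(b <- s) (w b)%:E * F b)%E.
Proof.
move=> w0 w1 HF.
apply: (@le_trans _ _ (\sum_(b <- s) (w b * c)%:E)%E).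
  by rewrite sumEFin -big_distrl /= w1 mul1r.
rewrite big_seq_cond [leRHS]big_seq_cond; apply: lee_sum => b /andP[bs _].
by rewrite EFinM; apply: lee_wpmul2l; [rewrite lee_fin|exact: HF].
Qed.

Lemma ineq_some (R : realType) (m V lam h x P cv : R) :
  0 < m -> m <= cv -> 0 < V -> m <= V -> 0 <= lam <= 1 -> 0 <= h <= 1 ->
  h * V - cv <= x -> 0 <= x -> 0 <= P ->
  (lam + m / V * (1 - lam)) * (V - (x + P)) <= cv + (1 - h) * (lam * (V - P)).
Proof.
move=> m0 mcv V0 mV /andP[l0 l1] /andP[h0 h1] xh x0 P0.
set q := m / V.
have qV : q * V = m by rewrite /q mulfVK // gt_eqF.
have q0 : 0 <= q by rewrite /q divr_ge0 // ltW.
have e1 : q * (1 - lam) * (V - (x + P)) <= m * (1 - lam).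
  have H1 : q * (1 - lam) * V = m * (1 - lam) by rewrite mulrAC qV.
  have H2 : 0 <= q * (1 - lam) * (x + P).
    by rewrite mulr_ge0 // ?addr_ge0 // mulr_ge0 // subr_ge0.
  nra.
have e2 : lam * (x - h * V + h * P) >= - lam * cv.
  rewrite mulNr -mulrN; apply: ler_wpM2l => //; nra.
nra.
Qed.

Lemma ineq_none (R : realType) (m V lam P cr g : R) :
  0 < m -> m <= cr -> 0 < V -> m <= V -> 0 <= lam <= 1 -> 0 <= P ->
  lam * (V - P) <= g + lam * cr ->
  (lam + m / V * (1 - lam)) * (V - P) <= cr + g.
Proof.
move=> m0 mcr V0 mV /andP[l0 l1] P0 H.
set q := m / V.
have qV : q * V = m by rewrite /q mulfVK // gt_eqF.
have q0 : 0 <= q by rewrite /q divr_ge0 // ltW.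
have e1 : q * (1 - lam) * (V - P) <= m * (1 - lam).
  have H1 : q * (1 - lam) * V = m * (1 - lam) by rewrite mulrAC qV.
  have H2 : 0 <= q * (1 - lam) * P.
    by rewrite mulr_ge0 // mulr_ge0 // subr_ge0.
  nra.
nra.
Qed.

Section Core.
Variables (R : realType) (D : probability R R) (h : R -> R) (cr cv tau : R).
Hypothesis mh : measurable_fun setT h.
Hypothesis h01 : forall r, 0 <= h r <= 1.
Hypothesis cr0 : 0 < cr.
Hypothesis cv0 : 0 < cv.
Hypothesis tau01 : 0 < tau < 1.
Hypothesis Heq : (cv%:E * \int[D]_r (Num.max (h r - tau) 0)%:E = (tau * cr)%:E)%E.

Definition VV := cv / tau.
Definition xf r := VV * Num.max (h r - tau) 0.

Lemma tau0 : 0 < tau. Proof. by case/andP: tau01. Qed.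
Lemma tau1 : tau < 1. Proof. by case/andP: tau01. Qed.
Lemma VV_gt0 : 0 < VV. Proof. by rewrite /VV divr_gt0 // tau0. Qed.
Lemma VV_tau : VV * tau = cv. Proof. by rewrite /VV mulfVK // gt_eqF // tau0. Qed.
Lemma cv_lt_VV : cv < VV.
Proof.
rewrite /VV ltr_pdivlMr ?tau0 //.
by rewrite gtr_pMr // tau1.
Qed.

Lemma xf_ge0 r : 0 <= xf r.
Proof. by rewrite /xf mulr_ge0 ?le_max ?lexx ?orbT // ltW // VV_gt0. Qed.

Lemma xf_ge r : h r * VV - cv <= xf r.
Proof.
rewrite -VV_tau (mulrC (h r)) -mulrBr; apply: ler_wpM2l; first exact: ltW VV_gt0.
by rewrite le_max lexx.
Qed.

Lemma xf_le r : xf r <= VV.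
Proof.
rewrite /xf -[leRHS]mulr1; apply: ler_wpM2l; first exact: ltW VV_gt0.
rewrite ge_max ler01 andbT.
have := h01 r; have := tau0; move=> ? /andP[? ?]; lra.
Qed.

Lemma mxf : measurable_fun setT (fun r => (xf r)%:E).
Proof.
apply/measurable_EFinP.
apply: measurable_funM; first exact: measurable_cst.
apply: (measurable_maxr (f := fun r => h r - tau) (g := fun _ => 0)).
  by apply: measurable_funB => //; exact: measurable_cst.
exact: measurable_cst.
Qed.

Lemma int_xf : (\int[D]_r (xf r)%:E = cr%:E)%E.
Proof.
under eq_integral do rewrite /xf EFinM.
have mm : measurable_fun setT (fun r => (Num.max (h r - tau) 0)%:E).
  apply/measurable_EFinP.
  apply: (measurable_maxr (f := fun r => h r - tau) (g := fun _ => 0)).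
    by apply: measurable_funB => //; exact: measurable_cst.
  exact: measurable_cst.
rewrite ge0_integralZl_EFin //; first last.
- exact: ltW VV_gt0.
- by move=> r _; rewrite lee_fin le_max lexx orbT.
have -> : VV%:E = ((tau^-1)%:E * cv%:E)%E by rewrite -EFinM mulrC.
by rewrite -muleA Heq -EFinM mulrA mulVf ?mul1r // gt_eqF // tau0.
Qed.


Definition Phi (a : seq action) (rs : seq R) :=
  \sum_(j <- iota 0 (size rs)) (if Some j \notin a then xf (nth 0 rs j) else 0).

Lemma Phi_ge0 a rs : 0 <= Phi a rs.
Proof. by apply: sumr_ge0 => j _; case: ifP => // _; exact: xf_ge0. Qed.

Lemma Phi_some a rs i : (i < size rs)%N -> Some i \notin a ->
  Phi a rs = xf (nth 0 rs i) + Phi (rcons a (Some i)) rs.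
Proof.
move=> Hi Hia; rewrite /Phi (bigD1_seq i) ?mem_iota ?iota_uniq //= Hia.
congr (_ + _); rewrite big_mkcond; apply: eq_bigr => j _.
rewrite mem_rcons inE.
case: (eqVneq j i) => [->|ji]; first by rewrite !eqxx.
have -> : (Some j == Some i) = false by apply/eqP => -[] /eqP; rewrite (negbTE ji).
by [].
Qed.

Lemma Phi_none a rs r :
  Phi (rcons a None) (rcons rs r) <= Phi a rs + xf r.
Proof.
rewrite /Phi size_rcons -addn1 iotaD add0n big_cat /= big_cons big_nil addr0.
apply: lerD.
  rewrite le_eqVlt; apply/orP; left; apply/eqP.
  rewrite big_seq [RHS]big_seq; apply: eq_bigr => j; rewrite mem_iota add0n => /andP[_ Hj].
  by rewrite mem_rcons inE /= nth_rcons Hj.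
rewrite nth_rcons ltnn eqxx.
by case: ifP => _; [exact: lexx| exact: xf_ge0].
Qed.

Definition mm := Num.min cr cv.
Definition lam (T : nat) := 1 - (1 - mm / VV) ^+ T.

Lemma mm_gt0 : 0 < mm. Proof. by rewrite /mm lt_min cr0 cv0. Qed.
Lemma mm_cr : mm <= cr. Proof. by rewrite /mm ge_min lexx. Qed.
Lemma mm_cv : mm <= cv. Proof. by rewrite /mm ge_min lexx orbT. Qed.
Lemma mm_VV : mm <= VV. Proof. exact: le_trans mm_cv (ltW cv_lt_VV). Qed.

Lemma q01 : 0 <= 1 - mm / VV <= 1.
Proof.
have V0 := VV_gt0.
rewrite subr_ge0 ler_pdivrMr // mul1r mm_VV /= lerBlDr lerDl.
by rewrite divr_ge0 // ltW // mm_gt0.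
Qed.

Lemma lam01 T : 0 <= lam T <= 1.
Proof.
have /andP[q0 q1] := q01.
rewrite /lam subr_ge0 exprn_ile1 //= lerBlDr lerDl exprn_ge0 //.
Qed.

Lemma lamS T : lam T.+1 = lam T + mm / VV * (1 - lam T).
Proof. rewrite /lam exprS; ring. Qed.

Lemma lam0 : lam 0 = 0. Proof. by rewrite /lam expr0 subrr. Qed.

Lemma valid_some a (rs : seq R) i : Some i \in valid a rs -> (i < size rs)%N /\ Some i \notin a.
Proof.
rewrite /valid inE /= => /mapP [j]; rewrite mem_filter mem_iota add0n => /andP[Hja /andP[_ Hj]] [->].
by [].
Qed.

Lemma LB (pi : policy R) : is_policy pi -> forall T a rs, size rs = ngen a ->
  ((lam T * (VV - Phi a rs))%:E <= cost_T D h cr cv pi T a rs)%E.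
Proof.
case=> p0 pout psum pm.
have cr0' := ltW cr0; have cv0' := ltW cv0.
elim=> [|T IH] a rs Hsz; first by rewrite lam0 mul0r.
rewrite /=; apply: aux1 => //.
have Hl := lam01 T.
case=> [i|] Hb.
- have [Hi Hia] := @valid_some a rs i Hb.
  have IH' := IH (rcons a (Some i)) rs; rewrite ngen_rcons addn0 in IH'; have {}IH' := IH' Hsz.
  rewrite (@Phi_some a rs i Hi Hia).
  set P'' := Phi (rcons a (Some i)) rs in IH' *.
  set G := cost_T _ _ _ _ _ _ _ _ in IH' *.
  apply: (@le_trans _ _ ((cv + (1 - h (nth 0 rs i)) * (lam T * (VV - P'')))%:E)).
    rewrite lee_fin lamS; apply: ineq_some.
    + exact: mm_gt0.
    + exact: mm_cv.
    + exact: VV_gt0.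
    + exact: mm_VV.
    + exact: Hl.
    + exact: h01.
    + exact: xf_ge.
    + exact: xf_ge0.
    + exact: Phi_ge0.
  rewrite EFinD EFinM; apply: leeD2l; apply: lee_wpmul2l => //.
  by rewrite lee_fin subr_ge0; case/andP: (h01 (nth 0 rs i)).
- set G := fun r => cost_T D h cr cv pi T (rcons a None) (rcons rs r).
  have IH' r : ((lam T * (VV - Phi (rcons a None) (rcons rs r)))%:E <= G r)%E.
    by apply: IH; rewrite size_rcons ngen_rcons Hsz addn1.
  have mG : measurable_fun setT G.
    exact: (@measurable_cost_rcons R D h cr cv mh h01 cr0' cv0' pi p0 pm T a rs Hsz).
  have G0 r : (0 <= G r)%E by apply: cost_ge0.
  have I0 : (0 <= \int[D]_r G r)%E by apply: integral_ge0 => r _.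
  have [Hneg|Hpos] := lerP (VV - Phi a rs) 0.
    apply: (@le_trans _ _ 0%E); last by apply: adde_ge0 => //; rewrite lee_fin.
    rewrite lee_fin; apply: mulr_ge0_le0 => //.
    by rewrite lamS; have := lam01 T; have := mm_gt0; have := VV_gt0; move=> *;
      apply: addr_ge0; [case/andP: Hl| apply: mulr_ge0; [apply: divr_ge0; apply: ltW|rewrite subr_ge0; case/andP: Hl]].
  have HI : ((lam T * (VV - Phi a rs))%:E <= \int[D]_r G r + (lam T * cr)%:E)%E.
    have mx : measurable_fun setT (fun r => (lam T * xf r)%:E).
      apply/measurable_EFinP; apply: measurable_funM; first exact: measurable_cst.
      by apply/measurable_EFinP; exact: mxf.
    have -> : (lam T * cr)%:E = (\int[D]_r (lam T * xf r)%:E)%E.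
      under eq_integral do rewrite EFinM.
      rewrite ge0_integralZl_EFin //; last by case/andP: Hl.
      - by rewrite int_xf EFinM.
      - by move=> r _; rewrite lee_fin xf_ge0.
      - exact: mxf.
    rewrite -ge0_integralD //; last first.
      by move=> r _; rewrite lee_fin mulr_ge0 ?xf_ge0 //; case/andP: Hl.
    apply: (@le_trans _ _ (\int[D]_r (lam T * (VV - Phi a rs))%:E)%E).
      rewrite integral_cst // [X in (_ * X)%E](_ : _ = 1%E) ?mule1 //; exact: probability_setT.
    apply: ge0_le_integral => //.
    - by move=> r _; rewrite lee_fin mulr_ge0 //; [case/andP: Hl|exact: ltW].
    - exact: emeasurable_funD.
    move=> r _.
    apply: (@le_trans _ _ ((lam T * (VV - Phi (rcons a None) (rcons rs r)))%:E + (lam T * xf r)%:E)%E).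
      rewrite -EFinD lee_fin -mulrDr; apply: ler_wpM2l; first by case/andP: Hl.
      have := Phi_none a rs r; lra.
    by apply: leeD2r; exact: IH'.
  move: I0 HI; case: (\int[D]_r G r)%E => [g| |] //= I0 HI; last by rewrite addey ?leey.
  rewrite -EFinD lee_fin lamS; apply: ineq_none.
  + exact: mm_gt0.
  + exact: mm_cr.
  + exact: VV_gt0.
  + exact: mm_VV.
  + exact: Hl.
  + exact: Phi_ge0.
  + by move: HI; rewrite -EFinD lee_fin.
Qed.

Lemma geom_bound (p : R) T : 0 <= p <= 1 -> p ^+ T * (1 + T%:R * (1 - p)) <= 1.
Proof.
move=> /andP[p0 p1]; elim: T => [|T IH]; first by rewrite expr0 mul0r addr0 mulr1.
have pT : 0 <= p ^+ T by exact: exprn_ge0.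
have A0 : 0 <= T%:R * (1 - p) by rewrite mulr_ge0 // subr_ge0.
rewrite exprS -mulrA mulrSr.
apply: le_trans IH.
have H : 0 <= (1 + T%:R * (1 - p)) - (1 + (T%:R + 1) * (1 - p)) * p by nra.
have := mulr_ge0 pT H; nra.
Qed.

Lemma LB_exp (pi : policy R) : is_policy pi -> (VV%:E <= exp_cost D h cr cv pi)%E.
Proof.
move=> Hpi; apply/lee_subgt0Pr => e e0.
set p := 1 - mm / VV.
have p01 : 0 <= p <= 1 := q01.
have q0 : 0 < 1 - p by rewrite /p opprB addrC subrK divr_gt0 ?mm_gt0 ?VV_gt0.
have V0 := VV_gt0.
pose T := Num.Def.archi_bound (VV / (e * (1 - p))).
have HT : VV / (e * (1 - p)) < T%:R.
  by apply: archi_boundP; apply: divr_ge0; [exact: ltW|apply: mulr_ge0; exact: ltW].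
have Hp := @geom_bound p T p01.
have key : p ^+ T * VV <= e.
  have H1 : VV < e * (1 + T%:R * (1 - p)).
    move: HT; rewrite ltr_pdivrMr ?mulr_gt0 // => HT; nra.
  have pT : 0 <= p ^+ T by apply: exprn_ge0; case/andP: p01.
  nra.
apply: (@le_trans _ _ (cost_T D h cr cv pi T [::] [::])); last first.
  by apply: ereal_sup_ubound; exists T.
apply: le_trans _ (@LB pi Hpi T [::] [::] erefl).
rewrite /Phi /= big_nil subr0 lee_fin /lam -/p.
lra.
Qed.

End Core.

Lemma valid_uniq (R : realType) a (rs : seq R) : uniq (valid a rs).
Proof.
rewrite /valid /=; apply/andP; split.
  by apply/negP => /mapP [i _].
by rewrite map_inj_uniq ?filter_uniq ?iota_uniq // => x y [].
Qed.

Lemma sum_indE (R : realType) (s : seq action) x (F : action -> \bar R) :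
  x \in s -> uniq s ->
  (\sum_(b <- s) ((if b == x then 1 else 0 : R)%:E * F b) = F x)%E.
Proof.
move=> xs us; rewrite (bigD1_seq x) //= eqxx mul1e big1 ?adde0 //.
by move=> b /negbTE ->; rewrite mul0e.
Qed.

Lemma sum_ind (R : realType) (s : seq action) x :
  x \in s -> uniq s ->
  \sum_(b <- s) (if b == x then 1 else 0 : R) = 1.
Proof.
move=> xs us; rewrite (bigD1_seq x) //= eqxx big1 ?addr0 //.
by move=> b /negbTE ->.
Qed.

Section Thr.
Variables (R : realType) (D : probability R R) (h : R -> R) (cr cv tau : R).
Hypothesis mh : measurable_fun setT h.
Hypothesis h01 : forall r, 0 <= h r <= 1.
Hypothesis cr0 : 0 < cr.
Hypothesis cv0 : 0 < cv.
Hypothesis tau01 : 0 < tau < 1.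
Hypothesis Heq : (cv%:E * \int[D]_r (Num.max (h r - tau) 0)%:E = (tau * cr)%:E)%E.

Lemma thr_in a (rs : seq R) : thr_action h tau a rs \in valid a rs.
Proof.
rewrite /thr_action; case: ifP => [/and4P [_ H0 Hn _]|_]; last by rewrite inE eqxx.
rewrite inE; apply/orP; right; apply/mapP; exists (size rs).-1 => //.
by rewrite mem_filter Hn mem_iota add0n /= prednK // leqnn.
Qed.

Lemma thr_policy : is_policy (threshold_policy h tau).
Proof.
split.
- by move=> a rs b; rewrite /threshold_policy; case: ifP.
- move=> a rs b Hb; rewrite /threshold_policy; case: ifP => // /eqP Hbt.
  by move: Hb; rewrite Hbt thr_in.
- by move=> a rs; rewrite /threshold_policy; apply: sum_ind; [exact: thr_in|exact: valid_uniq].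
move=> a b; set n := ngen a.
set C := [&& last (Some 0%N) a == None, (0 < n)%N & Some n.-1 \notin a].
rewrite (_ : (fun t : n.-tuple R => _) = (fun t : n.-tuple R =>
   if tau <= h (nth 0 (tval t) n.-1) then
     (if C then (if b == Some n.-1 then 1 else 0) else (if b == None then 1 else 0))
   else (if b == None then 1 else 0))).
  apply: measurable_fun_ifT.
  - apply: measurable_fun_ler; first exact: measurable_cst.
    apply: (measurableT_comp mh); exact: measurable_nth.
  - exact: measurable_cst.
  - exact: measurable_cst.
apply: boolp.funext => t.
rewrite /threshold_policy /thr_action size_tuple -(nth_last 0) size_tuple -/n.
rewrite /C; case: (tau <= h (nth 0 (tval t) n.-1)); rewrite ?andbT ?andbF //.
by case: (last (Some 0%N) a == None); case: (0 < n)%N; case: (Some n.-1 \in a).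
Qed.

Lemma thr_never : never_stores (threshold_policy h tau).
Proof.
move=> a rs i; rewrite /threshold_policy; case: ifP; last by rewrite ltxx.
move=> /eqP; rewrite /thr_action; case: ifP => [/and4P [Hl _ _ _] [->] _|//].
by split => //; apply/eqP.
Qed.

Definition Psi a (rs : seq R) :=
  if [&& last (Some 0%N) a == None, (0 < size rs)%N, Some (size rs).-1 \notin a
         & tau <= h (last 0 rs)]
  then cv + (1 - h (last 0 rs)) * VV cv tau else VV cv tau.

Lemma Psi_ge0 a rs : 0 <= Psi a rs.
Proof.
have V0 : 0 < VV cv tau by apply: VV_gt0.
rewrite /Psi; case: ifP => _; last exact: ltW.
apply: addr_ge0; first exact: ltW.
by apply: mulr_ge0; [rewrite subr_ge0; case/andP: (h01 (last 0 rs))|exact: ltW].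
Qed.

Lemma Psi_none a rs r : (forall i, Some i \in a -> (i < size rs)%N) ->
  Psi (rcons a None) (rcons rs r) = VV cv tau - xf h cv tau r.
Proof.
move=> Ha; rewrite /Psi !last_rcons size_rcons /=.
rewrite mem_rcons inE /=.
have -> : (Some (size rs) \in a) = false.
  by apply/negP => /Ha; rewrite ltnn.
rewrite /xf /=; case: ifP => Ht.
  have -> : Num.max (h r - tau) 0 = h r - tau by apply/max_idPl; rewrite subr_ge0.
  have E : VV cv tau * tau = cv by apply: VV_tau.
  rewrite mulrBr E; ring.
have -> : Num.max (h r - tau) 0 = 0.
  by apply/max_idPr; rewrite subr_le0 ltW // ltNge Ht.
by rewrite mulr0 subr0.
Qed.

Lemma UB T : forall a rs, size rs = ngen a -> (forall i, Some i \in a -> (i < size rs)%N) ->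
  (cost_T D h cr cv (threshold_policy h tau) T a rs <= (Psi a rs)%:E)%E.
Proof.
have cr0' := ltW cr0; have cv0' := ltW cv0.
have V0 : 0 < VV cv tau by apply: VV_gt0.
have [p0 pout psum pm] := thr_policy.
elim: T => [|T IH] a rs Hsz Ha; first by rewrite /= lee_fin Psi_ge0.
rewrite /= /threshold_policy sum_indE ?thr_in ?valid_uniq //.
rewrite /thr_action /Psi; case: ifP => Hc.
- have /and4P [_ H0 Hn _] := Hc.
  rewrite (nth_last 0) [in leRHS]EFinD [in leRHS]EFinM; apply: leeD2l; apply: lee_wpmul2l.
    by rewrite lee_fin subr_ge0; case/andP: (h01 (last 0 rs)).
  apply: le_trans (IH _ _ _ _) _.
  + by rewrite ngen_rcons addn0.
  + move=> i; rewrite mem_rcons inE => /orP [/eqP [->]|/Ha //].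
    by rewrite prednK.
  + by rewrite /Psi last_rcons /=.
- set G := fun r => cost_T D h cr cv (threshold_policy h tau) T (rcons a None) (rcons rs r).
  have mG : measurable_fun setT G.
    exact: (@measurable_cost_rcons R D h cr cv mh h01 cr0' cv0' _ p0 pm T a rs Hsz).
  have mV : measurable_fun setT (fun r => (VV cv tau - xf h cv tau r)%:E).
    apply/measurable_EFinP; apply: measurable_funB; first exact: measurable_cst.
    by apply/measurable_EFinP; apply: mxf.
  have Vx0 r : (0 <= (VV cv tau - xf h cv tau r)%:E)%E.
    by rewrite lee_fin subr_ge0; apply: xf_le.
  have HI : (\int[D]_r G r <= (VV cv tau - cr)%:E)%E.
    apply: (@le_trans _ _ (\int[D]_r (VV cv tau - xf h cv tau r)%:E)%E).
      apply: ge0_le_integral => //.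
      - by move=> r _; apply: cost_ge0.
      - move=> r _; rewrite -(Psi_none r Ha); apply: IH.
        + by rewrite size_rcons ngen_rcons Hsz addn1.
        + move=> i; rewrite mem_rcons inE /= size_rcons => /Ha; exact: ltnW.
    have E1 : (\int[D]_r ((VV cv tau - xf h cv tau r)%:E + (xf h cv tau r)%:E) =
               \int[D]_r (VV cv tau - xf h cv tau r)%:E + cr%:E)%E.
      rewrite ge0_integralD //; first by rewrite (@int_xf R D h cr cv tau mh cv0 tau01 Heq).
      - by move=> r _; rewrite lee_fin; apply: xf_ge0.
      - by apply: mxf.
    have E2 : (\int[D]_r ((VV cv tau - xf h cv tau r)%:E + (xf h cv tau r)%:E) = (VV cv tau)%:E)%E.
      under eq_integral do rewrite -EFinD subrK.
      rewrite integral_cst // [X in (_ * X)%E](_ : _ = 1%E) ?mule1 //; exact: probability_setT.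
    move: E1; rewrite E2.
    have I0 : (0 <= \int[D]_r (VV cv tau - xf h cv tau r)%:E)%E.
      by apply: integral_ge0 => r _.
    move: I0; case: (\int[D]_r (VV cv tau - xf h cv tau r)%:E)%E => [g| |] //= _.
    by move=> [->]; rewrite addrK.
  apply: (@le_trans _ _ (cr%:E + (VV cv tau - cr)%:E)%E).
    by apply: leeD2l.
  by rewrite -EFinD subrKC.
Qed.

Lemma UB_exp : (exp_cost D h cr cv (threshold_policy h tau) <= (VV cv tau)%:E)%E.
Proof.
apply: ge_ereal_sup => _ [T _ <-].
apply: le_trans (UB T (a := [::]) (rs := [::]) erefl _) _ => //.
Qed.

End Thr.

Import numFieldNormedType.Exports.

Lemma lip_cont (R : realType) (g : R -> R) (K : R) : 0 < K ->
  (forall x y, `|g x - g y| <= K * `|x - y|) -> continuous g.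
Proof.
move=> K0 lip x; apply/cvgrPdist_le => e e0.
have := (cvgrPdist_le _ _).1 (@cvg_id _ (nbhs x)) (e / K) (divr_gt0 e0 K0).
move=> H; near=> y; apply: le_trans (lip x y) _.
rewrite -ler_pdivlMl //; rewrite mulrC.
near: y; exact: H.
Unshelve. all: by end_near. Qed.

Section Tau.
Variables (R : realType) (D : probability R R) (h : R -> R) (cr cv : R).
Hypothesis mh : measurable_fun setT h.
Hypothesis h01 : forall r, 0 <= h r <= 1.
Hypothesis hpos : (0 < \int[D]_r (h r)%:E)%E.
Hypothesis cr0 : 0 < cr.
Hypothesis cv0 : 0 < cv.

Definition Itau (t : R) := (\int[D]_r (Num.max (h r - t) 0)%:E)%E.

Lemma mmax t : measurable_fun setT (fun r => (Num.max (h r - t) 0)%:E).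
Proof.
apply/measurable_EFinP.
apply: (measurable_maxr (f := fun r => h r - t) (g := fun _ => 0)).
  by apply: measurable_funB => //; exact: measurable_cst.
exact: measurable_cst.
Qed.

Lemma max_ge0 (x : R) : 0 <= Num.max x 0.
Proof. by rewrite le_max lexx orbT. Qed.

Lemma int_cst (c : R) : (\int[D]_r c%:E = c%:E)%E.
Proof.
by rewrite integral_cst // [X in (_ * X)%E](_ : _ = 1%E) ?mule1 //; exact: probability_setT.
Qed.

Lemma Itau_ge0 t : (0 <= Itau t)%E.
Proof. by apply: integral_ge0 => r _; rewrite lee_fin max_ge0. Qed.

Lemma Itau_le t : (Itau t <= (`|t| + 1)%:E)%E.
Proof.
rewrite -int_cst; apply: ge0_le_integral => //.
- by move=> r _; rewrite lee_fin max_ge0.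
- exact: mmax.
move=> r _; rewrite lee_fin ge_max; apply/andP; split.
  have := h01 r; have := ler_norm (- t); rewrite normrN; move=> ? /andP[? ?]; lra.
by rewrite addr_ge0.
Qed.

Lemma Itau_fin t : Itau t = (fine (Itau t))%:E.
Proof.
rewrite fineK // ge0_fin_numE ?Itau_ge0 //.
by apply: le_lt_trans (Itau_le t) _; rewrite ltry.
Qed.

Definition gt t := fine (Itau t).

Lemma Itau_lip t s : (Itau t <= Itau s + (`|t - s|)%:E)%E.
Proof.
rewrite -[X in (_ + X)%E]int_cst -ge0_integralD //.
2: by move=> r _; rewrite lee_fin max_ge0.
2: exact: mmax.
apply: ge0_le_integral => //.
- by move=> r _; rewrite lee_fin max_ge0.
- exact: mmax.
- by apply: emeasurable_funD; [exact: mmax|exact: measurable_cst].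
move=> r _; rewrite -EFinD lee_fin ge_max; apply/andP; split.
  have := le_max (h r - s) (h r - s) 0; rewrite lexx /= => Hm.
  have := ler_norm (s - t); rewrite distrC => Hn.
  lra.
by rewrite addr_ge0 // max_ge0.
Qed.

Lemma gt_lip t s : `|gt t - gt s| <= `|t - s|.
Proof.
rewrite ler_norml; apply/andP; split.
  have := Itau_lip s t; rewrite /gt (Itau_fin s) (Itau_fin t) -EFinD lee_fin distrC /=.
  lra.
have := Itau_lip t s; rewrite /gt (Itau_fin s) (Itau_fin t) -EFinD lee_fin /=.
lra.
Qed.

Lemma Itau_anti t s : t <= s -> (Itau s <= Itau t)%E.
Proof.
move=> ts; apply: ge0_le_integral => //.
- by move=> r _; rewrite lee_fin max_ge0.
- exact: mmax.
- exact: mmax.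
move=> r _; rewrite lee_fin ge_max max_ge0 andbT le_max; apply/orP; left.
by rewrite lerD2l lerN2.
Qed.

Lemma Itau0 : Itau 0 = (\int[D]_r (h r)%:E)%E.
Proof.
apply: eq_integral => r _; congr EFin; rewrite subr0.
by apply/max_idPl; case/andP: (h01 r).
Qed.

Lemma Itau1 : Itau 1 = 0%E.
Proof.
rewrite /Itau (eq_integral (fun _ => 0%E)) ?integral0 // => r _.
congr EFin; apply/max_idPr; rewrite subr_le0; by case/andP: (h01 r).
Qed.

Definition ftau t := cv * gt t - t * cr.

Lemma ftau_cont : continuous ftau.
Proof.
apply: (@lip_cont _ _ (cv + cr)); first by rewrite addr_gt0.
move=> x y; rewrite /ftau.
have -> : cv * gt x - x * cr - (cv * gt y - y * cr) = cv * (gt x - gt y) + cr * (y - x).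
  ring.
apply: le_trans (ler_normD _ _) _.
rewrite !normrM (gtr0_norm cv0) (gtr0_norm cr0) mulrDl (distrC y x).
by apply: lerD => //; rewrite ler_wpM2l ?gt_lip // ltW.
Qed.

Lemma tau_exists : exists t, 0 < t < 1 /\
  (cv%:E * \int[D]_r (Num.max (h r - t) 0)%:E = (t * cr)%:E)%E.
Proof.
have f0 : 0 < ftau 0.
  rewrite /ftau mul0r subr0 mulr_gt0 // /gt Itau0.
  have := Itau_fin 0; rewrite Itau0 => E.
  by move: hpos; rewrite E lte_fin.
have f1 : ftau 1 < 0.
  by rewrite /ftau /gt Itau1 /= mulr0 mul1r sub0r oppr_lt0.
have [c Hc Ec] : exists2 c, c \in `[0, 1] & ftau c = 0.
  apply: IVT; first exact: ler01.
    exact: continuous_subspaceT ftau_cont.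
  by rewrite ge_min le_max (ltW f1) (ltW f0) orbT.
exists c; move: Hc; rewrite in_itv /= => /andP[c0 c1].
have cn0 : c != 0 by apply/eqP => E; subst c; by rewrite Ec ltxx in f0.
have cn1 : c != 1 by apply/eqP => E; subst c; by rewrite Ec ltxx in f1.
split.
  by rewrite lt_neqAle eq_sym cn0 c0 lt_neqAle cn1 c1.
rewrite -/(Itau c) Itau_fin -EFinM; congr EFin.
by move: Ec; rewrite /ftau /gt; move/eqP; rewrite subr_eq0 => /eqP.
Qed.

Lemma tau_uniq_aux t s :
  (cv%:E * \int[D]_r (Num.max (h r - t) 0)%:E = (t * cr)%:E)%E ->
  (cv%:E * \int[D]_r (Num.max (h r - s) 0)%:E = (s * cr)%:E)%E ->
  t <= s -> s <= t.
Proof.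
move=> Et Es ts.
have := Itau_anti ts => H.
have : ((s * cr)%:E <= (t * cr)%:E)%E.
  rewrite -Et -Es; apply: lee_wpmul2l => //; by rewrite lee_fin ltW.
by rewrite lee_fin ler_pM2r.
Qed.

End Tau.

Unset Implicit Arguments.

Theorem lemma2 (R : realType) (D : probability R R) (h : R -> R)
    (c_rew c_ver : R) :
  measurable_fun setT h ->
  (forall r, 0 <= h r <= 1) ->
  (0 < \int[D]_r (h r)%:E)%E ->
  0 < c_rew -> 0 < c_ver ->
  (exists pi : policy R,
      [/\ is_policy pi, never_stores pi &
          forall pi' : policy R, is_policy pi' ->
            (exp_cost D h c_rew c_ver pi <= exp_cost D h c_rew c_ver pi')%E])
  /\
  (exists! tau : R, 0 < tau < 1 /\
      (c_ver%:E * \int[D]_r (Num.max (h r - tau) 0)%:E = (tau * c_rew)%:E)%E)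
  /\
  (forall tau : R, 0 < tau < 1 ->
      (c_ver%:E * \int[D]_r (Num.max (h r - tau) 0)%:E = (tau * c_rew)%:E)%E ->
      [/\ is_policy (threshold_policy h tau),
          never_stores (threshold_policy h tau) &
          forall pi' : policy R, is_policy pi' ->
            (exp_cost D h c_rew c_ver (threshold_policy h tau)
               <= exp_cost D h c_rew c_ver pi')%E]).
Proof.
move=> mh h01 hpos cr0 cv0.
have main : forall tau : R, 0 < tau < 1 ->
      (c_ver%:E * \int[D]_r (Num.max (h r - tau) 0)%:E = (tau * c_rew)%:E)%E ->
      [/\ is_policy (threshold_policy h tau),
          never_stores (threshold_policy h tau) &
          forall pi' : policy R, is_policy pi' ->
            (exp_cost D h c_rew c_ver (threshold_policy h tau)
               <= exp_cost D h c_rew c_ver pi')%E].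
  move=> tau t01 Heq; split.
  - by apply: thr_policy.
  - exact: thr_never.
  - move=> pi' Hpi'.
    apply: (@le_trans _ _ (VV c_ver tau)%:E).
      by apply: (@UB_exp R D h c_rew c_ver tau).
    by apply: (@LB_exp R D h c_rew c_ver tau).
have [t [t01 Et]] : exists t : R, 0 < t < 1 /\
  (c_ver%:E * \int[D]_r (Num.max (h r - t) 0)%:E = (t * c_rew)%:E)%E.
  by apply: tau_exists.
split; [|split].
- by exists (threshold_policy h t); apply: main.
- exists t; split; first by split.
  move=> s [s01 Es].
  have H1 := tau_uniq_aux mh cr0 cv0 Et Es.
  have H2 := tau_uniq_aux mh cr0 cv0 Es Et.
  case/orP: (le_total t s) => Hts; apply/eqP; rewrite eq_le.
  - by rewrite Hts (H1 Hts).
  - by rewrite Hts (H2 Hts).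
- exact: main.
Qed.
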